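(* Let $L\ge1$, $d,k,m$ be positive integers with $m>\max\{d,k\}$, $a_0=d$, $a_L=k$, $a_\ell=m$ for $1\le\ell\le L-1$, let $\mathbf W^\ell\in\mathbb R^{a_\ell\times a_{\ell-1}}$ for $\ell=1,\dots,L$, let $\beta\in\mathbb R$, and let $\boldsymbol\Sigma\in\mathbb R^{d\times d}$ be symmetric positive definite. Define $$\widehat{\mathbf G}_O^\beta=\sum_{\ell=1}^L\big(\mathbf W_\beta^{L:\ell+1}\mathbf W_\beta^{\ell+1:L}\big)\otimes\big(\boldsymbol\Sigma^{1/2}\mathbf W_\beta^{1:\ell-1}\mathbf W_\beta^{\ell-1:1}\boldsymbol\Sigma^{1/2}\big).$$ Assume $\alpha_\ell^\beta:=\sigma_{\min}^2(\mathbf W_\beta^{L:\ell+1})\,\sigma_{\min}^2(\mathbf W_\beta^{1:\ell-1})>0$ for all $\ell$, and let $\gamma_\ell^\beta=\alpha_\ell^\beta/\sum_{i=1}^L\alpha_i^\beta$. Then $\widehat{\mathbf G}_O^\beta$ is positive definite and $$\kappa(\widehat{\mathbf G}_O^\beta)\le\kappa(\boldsymbol\Sigma)\sum_{\ell=1}^L\gamma_\ell^\beta\,\kappa^2(\mathbf W_\beta^{L:\ell+1})\,\kappa^2(\mathbf W_\beta^{1:\ell-1})\le\kappa(\boldsymbol\Sigma)\max_{1\le\ell\le L}\kappa^2(\mathbf W_\beta^{L:\ell+1})\,\kappa^2(\mathbf W_\beta^{1:\ell-1}).$$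
   Context: Here $\mathbf I$ denotes the rectangular identity of the appropriate size ($a_\ell\times a_{\ell-1}$, ones on the main diagonal, zeros elsewhere), so $\mathbf W^\ell+\beta\mathbf I$ is the $\ell$-th layer of the linear residual network $F(\mathbf x)=(\mathbf W^L+\beta\mathbf I)\cdots(\mathbf W^1+\beta\mathbf I)\mathbf x$. For $i>j$, $\mathbf W_\beta^{i:j}=(\mathbf W^i+\beta\mathbf I)\cdots(\mathbf W^j+\beta\mathbf I)$; for $i<j$, $\mathbf W_\beta^{i:j}=(\mathbf W^i+\beta\mathbf I)^\top\cdots(\mathbf W^j+\beta\mathbf I)^\top$; empty products are identities ($\mathbf I_k$ for $\ell=L$ in the first factor, $\mathbf I_d$ for $\ell=1$ in the second). $\boldsymbol\Sigma^{1/2}$ is the positive semidefinite square root, $\otimes$ the Kronecker product. For symmetric positive definite $\mathbf A$, $\kappa(\mathbf A)=\lambda_{\max}/\lambda_{\min}$; for rectangular $\mathbf A\in\mathbb R^{p\times q}$, $\sigma_{\min}(\mathbf A)$ is the $\min(p,q)$-th largest singular value and $\kappa(\mathbf A)=\sigma_{\max}(\mathbf A)/\sigma_{\min}(\mathbf A)$. *)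

(* Defs.v *)
From HB Require Import structures.
From mathcomp Require Import all_boot all_order all_algebra.
From mathcomp Require Import classical_sets reals.
From mathcomp.real_closed Require Export mxtens.

Set Implicit Arguments.
Unset Strict Implicit.
Unset Printing Implicit Defensive.

Import Order.TTheory GRing.Theory Num.Theory.
Local Open Scope ring_scope.
Local Open Scope classical_set_scope.

Section Defs.
Variable R : realType.

Definition rid (p q : nat) : 'M[R]_(p, q) :=
  \matrix_(i < p, j < q) ((i : nat) == j)%:R.

Definition posdef (n : nat) (A : 'M[R]_n) : Prop :=
  A^T = A /\ forall x : 'cV[R]_n, x != 0 -> 0 < (x^T *m A *m x) 0 0.

Definition psd (n : nat) (A : 'M[R]_n) : Prop :=
  A^T = A /\ forall x : 'cV[R]_n, 0 <= (x^T *m A *m x) 0 0.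

Definition lmax (n : nat) (A : 'M[R]_n) : R := sup [set a : R | eigenvalue A a].
Definition lmin (n : nat) (A : 'M[R]_n) : R := inf [set a : R | eigenvalue A a].

Definition kappa_spd (n : nat) (A : 'M[R]_n) : R := lmax A / lmin A.

Definition psd_sqrt (n : nat) (A : 'M[R]_n) : 'M[R]_n :=
  xget 0 [set S : 'M[R]_n | psd S /\ S *m S = A].

(* Singular values of A in R^{p x q}: square roots of the eigenvalues of the
   min(p,q) x min(p,q) Gram matrix.  sigma_min is the min(p,q)-th largest. *)
Definition sigma_max (p q : nat) (A : 'M[R]_(p, q)) : R :=
  Num.sqrt (lmax (A^T *m A)).
Definition sigma_min (p q : nat) (A : 'M[R]_(p, q)) : R :=
  if (q <= p)%N then Num.sqrt (lmin (A^T *m A)) else Num.sqrt (lmin (A *m A^T)).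
Definition kappa_rect (p q : nat) (A : 'M[R]_(p, q)) : R :=
  sigma_max A / sigma_min A.

Definition width (L d k m l : nat) : nat :=
  if l == 0%N then d else if l == L then k else m.

Section Net.
Variables (a : nat -> nat) (W : forall l : nat, 'M[R]_(a l.+1, a l)) (beta : R).

(* Paper's l-th layer (l >= 1) is  W^l + beta I : 'M_(a_l, a_{l-1});
   here [layer l] is paper's layer l+1. *)
Definition layer (l : nat) : 'M[R]_(a l.+1, a l) := W l + beta *: rid _ _.

(* prodW i j = W_beta^{i:j+1} = (W^i+bI)...(W^{j+1}+bI) for j <= i,
   the empty product (identity of size a_i) when j = i. *)
Fixpoint prodW (i j : nat) : 'M[R]_(a i, a j) :=
  match i with
  | 0 => rid _ _
  | i'.+1 => if (j <= i')%N then layer i' *m prodW i' j else rid _ _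
  end.
End Net.

End Defs.

(* Main.v *)
Require Import Defs.
From HB Require Import structures.
From mathcomp Require Import all_boot all_order all_algebra.
From mathcomp Require Import classical_sets reals.
From mathcomp.real_closed Require Import mxtens complex.
From mathcomp Require Import ring lra.
Import Order.TTheory GRing.Theory Num.Theory.
Local Open Scope ring_scope.
Set Implicit Arguments.
Unset Strict Implicit.

Lemma sup_max_eq (R : realType) (E : set R) (M : R) :
  E M -> (forall a, E a -> a <= M) -> sup E = M.
Proof.
move=> EM ub; apply/le_anti/andP; split.
  by apply: ge_sup; [exists M | move=> a /ub].
have := ub_le_sup (E:=E); apply; first by exists M => a /ub. exact: EM.
Qed.

Lemma inf_min_eq (R : realType) (E : set R) (m : R) :
  E m -> (forall a, E a -> m <= a) -> inf E = m.
Proof.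
move=> Em lb; apply/le_anti/andP; split.
  have := ge_inf (E:=E); apply; first by exists m => a /lb. exact: Em.
by apply: lb_le_inf; [exists m | move=> a /lb].
Qed.

Lemma exists_argmax (R : realType) n (i0 : 'I_n) (f : 'I_n -> R) :
  exists i, forall j, f j <= f i.
Proof. by case: (@arg_maxP _ _ _ i0 xpredT f isT) => i _ H; exists i => j; exact: H. Qed.

Lemma exists_argmin (R : realType) n (i0 : 'I_n) (f : 'I_n -> R) :
  exists i, forall j, f i <= f j.
Proof. by case: (@arg_minP _ _ _ i0 xpredT f isT) => i _ H; exists i => j; exact: H. Qed.

Definition qf {R : realType} {n} (A : 'M[R]_n) (x : 'cV[R]_n) : R := (x^T *m A *m x) 0 0.
Definition nsq {R : realType} {n} (x : 'cV[R]_n) : R := (x^T *m x) 0 0.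

Lemma nsqE (R : realType) n (x : 'cV[R]_n) : nsq x = \sum_i x i 0 ^+ 2.
Proof. by rewrite /nsq mxE; apply: eq_bigr => i _; rewrite mxE expr2. Qed.

Lemma nsq_ge0 (R : realType) n (x : 'cV[R]_n) : 0 <= nsq x.
Proof. by rewrite nsqE sumr_ge0 // => i _; rewrite sqr_ge0. Qed.

Lemma nsq_gt0 (R : realType) n (x : 'cV[R]_n) : x != 0 -> 0 < nsq x.
Proof.
move=> xn0; rewrite lt_def nsq_ge0 andbT; apply: contra xn0.
rewrite nsqE psumr_eq0 => [/allP H|i _]; last exact: sqr_ge0.
apply/eqP/matrixP => i j; rewrite ord1 mxE.
by have := H i (mem_index_enum _); rewrite sqrf_eq0 => /eqP.
Qed.

Lemma conj_toC (R : realType) (r : R) :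
  Num.conj (real_complex R r) = real_complex R r.
Proof. by apply: conj_Creal; rewrite complex_real. Qed.

Lemma map_conj_toC (R : realType) p q (x : 'M[R]_(p, q)) :
  map_mx Num.conj (map_mx (real_complex R) x) = map_mx (real_complex R) x.
Proof. by apply/matrixP => i j; rewrite !mxE conj_toC. Qed.

Lemma qf_diag (R : realType) n (B : 'M[R]_n) (W : 'M[R[i]]_n) (D : 'rV[R[i]]_n)
  (x : 'cV[R]_n) :
  W *m map_mx Num.conj W^T = 1%:M ->
  map_mx (real_complex R) B = map_mx Num.conj W^T *m diag_mx D *m W ->
  let y := W *m map_mx (real_complex R) x in
  real_complex R (qf B x) = \sum_i D 0 i * (Num.conj (y i 0) * y i 0) /\
  real_complex R (nsq x) = \sum_i Num.conj (y i 0) * y i 0.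
Proof.
move=> WU hB y.
set xc := map_mx (real_complex R) x.
have hy : xc^T *m map_mx Num.conj W^T = (map_mx Num.conj y)^T.
  rewrite /y map_mxM map_conj_toC trmx_mul; congr (_ *m _); by apply/matrixP => i j; rewrite !mxE.
split.
  have -> : real_complex R (qf B x) = (xc^T *m map_mx (real_complex R) B *m xc) 0 0.
    transitivity ((map_mx (real_complex R) (x^T *m B *m x)) 0 0); first by rewrite mxE.
    by rewrite !map_mxM map_trmx.
  rewrite hB !mulmxA hy -[_ *m W *m xc]mulmxA -/y mxE.
  apply: eq_bigr => j _; rewrite mul_mx_diag !mxE.
  by rewrite [_ * D 0 j]mulrC mulrA.
have -> : real_complex R (nsq x) = (xc^T *m xc) 0 0.
    transitivity ((map_mx (real_complex R) (x^T *m x)) 0 0); first by rewrite mxE.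
    by rewrite !map_mxM map_trmx.
have WU' := mulmx1C WU.
rewrite -[xc^T]mulmx1 -WU' !mulmxA hy -mulmxA -/y mxE.
by apply: eq_bigr => j _; rewrite !mxE.
Qed.

Lemma qf_bounds (R : realType) n (B : 'M[R]_n) (W : 'M[R[i]]_n) (t : 'I_n -> R)
  (lo hi : R) :
  W *m map_mx Num.conj W^T = 1%:M ->
  map_mx (real_complex R) B =
    map_mx Num.conj W^T *m diag_mx (\row_i real_complex R (t i)) *m W ->
  (forall i, lo <= t i <= hi) ->
  forall x, lo * nsq x <= qf B x <= hi * nsq x.
Proof.
move=> WU hB ht x; have [eq1 eq2] := qf_diag x WU hB.
set y := W *m _ in eq1 eq2.
rewrite -!lecR !rmorphM /= eq1 eq2 !mulr_sumr; apply/andP; split.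
  apply: ler_sum => i _; rewrite mxE; apply: ler_wpM2r.
    by rewrite mulrC; apply: mulcJ_ge0.
  by rewrite mxE lecR; case/andP: (ht i).
apply: ler_sum => i _; rewrite mxE; apply: ler_wpM2r.
  by rewrite mulrC; apply: mulcJ_ge0.
by rewrite lecR; case/andP: (ht i).
Qed.

Lemma spec_dec (R : realType) n (B : 'M[R]_n) : B^T = B ->
  exists (U : 'M[R[i]]_n) (t : 'I_n -> R),
   [/\ U *m map_mx Num.conj U^T = 1%:M,
       map_mx (real_complex R) B =
         map_mx Num.conj U^T *m diag_mx (\row_i real_complex R (t i)) *m U &
       forall i, eigenvalue B (t i)].
Proof.
move=> Bsym; set Bc := map_mx (real_complex R) B.
have herm : Bc \is hermsymmx.
  apply: realsym_hermsym.
    apply/is_hermitianmxP; rewrite expr0 scale1r; apply/matrixP => i j.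
    by rewrite !mxE -[in LHS]Bsym mxE.
  by apply/mxOverP => i j; rewrite mxE complex_real.
have /hermitian_normalmx/orthomx_spectralP hA := herm.
have Uu := spectral_unitarymx Bc.
have Dr := hermitian_spectral_diag_real herm.
set U := spectralmx Bc in hA Uu; set D := spectral_diag Bc in hA Dr.
have UU : U *m map_mx Num.conj U^T = 1%:M by apply/unitarymxP.
have hD : D = \row_i real_complex R (@complex.Re R (D 0 i)).
  apply/rowP => i; rewrite mxE; apply/esym/RRe_real.
  by move/mxOverP: Dr; apply.
rewrite invmx_unitary // hD in hA.
exists U, (fun i => @complex.Re R (D 0 i)); split => // i.
rewrite -(eigenvalue_map (real_complex R)) -/Bc.
apply/eigenvalueP; exists (row i U).
  rewrite -row_mul {1}hA !mulmxA UU mul1mx mul_diag_mx; apply/rowP => j.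
  by rewrite !mxE.
apply/negP => /eqP h0.
have := congr1 (fun M => (row i M) 0 i) UU.
by rewrite row_mul h0 mul0mx !mxE eqxx => /eqP; rewrite eq_sym oner_eq0.
Qed.

Lemma eig_qf (R : realType) n (B : 'M[R]_n) (v : 'rV[R]_n) a :
  v *m B = a *: v -> qf B v^T = a * nsq v^T.
Proof. by move=> hv; rewrite /qf /nsq trmxK hv -scalemxAl mxE. Qed.

Lemma eig_bounds (R : realType) n (B : 'M[R]_n) (lo hi : R) :
  (forall x, lo * nsq x <= qf B x <= hi * nsq x) ->
  forall a, eigenvalue B a -> lo <= a <= hi.
Proof.
move=> hq a /eigenvalueP [v hv vn0].
have hp : 0 < nsq v^T by apply: nsq_gt0; rewrite trmx_eq0.
have := hq v^T; rewrite (eig_qf hv) => /andP [h1 h2].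
by rewrite -(ler_pM2r hp) h1 -(ler_pM2r hp) h2.
Qed.

Lemma sym_spec (R : realType) n (B : 'M[R]_n) : (0 < n)%N -> B^T = B ->
  [/\ eigenvalue B (lmax B), eigenvalue B (lmin B),
      (forall x, lmin B * nsq x <= qf B x <= lmax B * nsq x) &
      exists (U : 'M[R[i]]_n) (t : 'I_n -> R),
       [/\ U *m map_mx Num.conj U^T = 1%:M,
       map_mx (real_complex R) B =
         map_mx Num.conj U^T *m diag_mx (\row_i real_complex R (t i)) *m U &
       forall i, lmin B <= t i <= lmax B]].
Proof.
move=> n0 Bsym; have [U [t [UU hB ht]]] := spec_dec Bsym.
have [iM hM] := exists_argmax (Ordinal n0) t.
have [im hm] := exists_argmin (Ordinal n0) t.
have hq := qf_bounds UU hB (fun i => introT andP (conj (hm i) (hM i))).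
have he := eig_bounds hq.
have eM : lmax B = t iM.
  by apply: sup_max_eq; [exact: ht | move=> a /he /andP []].
have em : lmin B = t im.
  by apply: inf_min_eq; [exact: ht | move=> a /he /andP []].
rewrite eM em; split => //; exists U, t; split => // i.
by rewrite hm hM.
Qed.

Lemma interp_poly (R : realType) (f : R -> R) (s : seq R) :
  exists p q : {poly R}, [/\ forall x, x \in s -> p.[x] = f x,
     forall x, x \in s -> q.[x] = 0 & forall y, y \notin s -> q.[y] != 0].
Proof.
elim: s => [|a s [p [q [hp hq hq']]]].
  by exists 0, 1; split => // y _; rewrite hornerC oner_eq0.
case: (boolP (a \in s)) => ha.
  exists p, q; split => [x|x|y].
  - by rewrite inE => /orP [/eqP ->|/hp]; [apply: hp|].
  - by rewrite inE => /orP [/eqP ->|/hq]; [apply: hq|].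
  - by rewrite inE negb_or => /andP [_ /hq'].
exists (p + ((f a - p.[a]) / q.[a]) *: q), (q * ('X - a%:P)); split => [x|x|y].
- rewrite inE => /orP [/eqP ->|hx].
    rewrite hornerD hornerZ divfK ?hq' //; by rewrite addrC subrK.
  by rewrite hornerD hornerZ (hq x hx) mulr0 addr0 hp.
- rewrite inE => /orP [/eqP ->|hx]; rewrite hornerM hornerXsubC.
    by rewrite subrr mulr0.
  by rewrite hq // mul0r.
- rewrite inE negb_or => /andP [ya /hq' qy]; rewrite hornerM hornerXsubC.
  by rewrite mulf_neq0 // subr_eq0.
Qed.

Lemma eig_ge0 (R : realType) n (A : 'M[R]_n) a :
  (forall x, 0 <= qf A x) -> eigenvalue A a -> 0 <= a.
Proof.
move=> hA /eigenvalueP [v hv vn0].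
have hp : 0 < nsq v^T by apply: nsq_gt0; rewrite trmx_eq0.
by have := hA v^T; rewrite (eig_qf hv) pmulr_lge0.
Qed.

Lemma sqrt_exists (R : realType) n (A : 'M[R]_n) : A^T = A ->
  (forall x, 0 <= qf A x) -> exists S : 'M[R]_n, psd S /\ S *m S = A.
Proof.
case: n A => [|n] A Asym Apsd.
  exists 0; split; last by apply/matrixP => [[]].
  by split; [rewrite trmx0 | move=> x; rewrite mulmx0 mul0mx mxE].
have [U [t [UU hA ht]]] := spec_dec Asym.
have t0 : forall i, 0 <= t i := fun i => eig_ge0 Apsd (ht i).
have [p [_ [hp _ _]]] := interp_poly (@Num.sqrt R) (codom t).
have [Uu _] := mulmx1_unit UU.
have Uinv : invmx U = map_mx Num.conj U^T.
  by rewrite -[LHS]mulmx1 -UU mulmxA mulVmx // mul1mx.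
pose D := \row_i real_complex R (Num.sqrt (t i)).
have hA' : map_mx (real_complex R) A =
    invmx U *m diag_mx (\row_i real_complex R (t i)) *m U by rewrite Uinv.
have hD : map_mx (horner (map_poly (real_complex R) p))
    (\row_i real_complex R (t i)) = D.
  by apply/rowP => i; rewrite !mxE horner_map hp // codom_f.
have hS0 : map_mx (real_complex R) (horner_mx A p) = invmx U *m diag_mx D *m U.
  rewrite map_horner_mx hA'.
  rewrite (horner_mx_uconjC _ _ Uu).
  rewrite horner_mx_diag.
  rewrite hD.
  reflexivity.
have hS : map_mx (real_complex R) (horner_mx A p) =
    map_mx Num.conj U^T *m diag_mx D *m U.
  rewrite hS0.
  rewrite Uinv.
  reflexivity.
exists (horner_mx A p); split; first split.
- apply: (map_mx_inj (f := real_complex R)).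
  transitivity ((map_mx (real_complex R) (horner_mx A p))^T).
    by apply/matrixP => i j; rewrite !mxE.
  transitivity (map_mx Num.conj (map_mx (real_complex R) (horner_mx A p)));
    last exact: map_conj_toC.
  rewrite hS !trmx_mul tr_diag_mx !map_mxM map_diag_mx.
  have -> : map_mx Num.conj D = D by apply/rowP => i; rewrite !mxE conj_toC.
  have -> : map_mx Num.conj (map_mx Num.conj U^T) = U^T.
    by apply/matrixP => i j; rewrite !mxE conjCK.
  have -> : (map_mx Num.conj U^T)^T = map_mx Num.conj U.
    by apply/matrixP => i j; rewrite !mxE.
  by rewrite mulmxA; congr (_ *m _).
- move=> x; have [eq1 _] := qf_diag x UU hS.
  change (0 <= qf (horner_mx A p) x).
  rewrite -(lecR 0 (qf (horner_mx A p) x)) rmorph0 eq1; apply: sumr_ge0 => i _; apply: mulr_ge0.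
    by rewrite /D mxE ler0c sqrtr_ge0.
  by rewrite mulrC; apply: mulcJ_ge0.
- apply: (map_mx_inj (f := real_complex R)).
  rewrite map_mxM hS hA !mulmxA -[_ *m U *m _]mulmxA UU mulmx1.
  rewrite -[_ *m diag_mx D *m diag_mx D]mulmxA mulmx_diag.
  have -> : \row_j (D 0 j * D 0 j) = \row_i real_complex R (t i).
    by apply/rowP => i; rewrite !mxE -rmorphM -expr2 sqr_sqrtr.
  reflexivity.
Qed.

Lemma tens_diag (K : comNzRingType) p q (d : 'rV[K]_p) (e : 'rV[K]_q) :
  diag_mx d *t diag_mx e =
  diag_mx (\row_k (d 0 (mxtens_unindex k).1 * e 0 (mxtens_unindex k).2)).
Proof.
apply/matrixP => i j.
case: (mxtens_indexP i) => i1 i2; case: (mxtens_indexP j) => j1 j2.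
rewrite tensmxE !mxE mxtens_indexK /= (inj_eq (can_inj (@mxtens_indexK _ _))) xpair_eqE.
by case: (eqVneq i1 j1) => [->|] /=; case: (eqVneq i2 j2) => [->|] /=;
  rewrite ?mulr1n ?mulr0n ?mulr0 ?mul0r.
Qed.

Lemma tens11 (K : comNzRingType) p q :
  (1%:M : 'M[K]_p) *t (1%:M : 'M[K]_q) = 1%:M.
Proof.
apply/matrixP => i j.
case: (mxtens_indexP i) => i1 i2; case: (mxtens_indexP j) => j1 j2.
rewrite tensmxE !mxE (inj_eq (can_inj (@mxtens_indexK _ _))) xpair_eqE.
by case: (i1 == j1); case: (i2 == j2); rewrite /= ?mulr1 ?mulr0.
Qed.

Lemma tens_bounds (R : realType) p q (A : 'M[R]_p) (B : 'M[R]_q)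
  (UA : 'M[R[i]]_p) (UB : 'M[R[i]]_q) (tA : 'I_p -> R) (tB : 'I_q -> R)
  (loA hiA loB hiB : R) :
  UA *m map_mx Num.conj UA^T = 1%:M ->
  map_mx (real_complex R) A =
     map_mx Num.conj UA^T *m diag_mx (\row_i real_complex R (tA i)) *m UA ->
  UB *m map_mx Num.conj UB^T = 1%:M ->
  map_mx (real_complex R) B =
     map_mx Num.conj UB^T *m diag_mx (\row_i real_complex R (tB i)) *m UB ->
  (forall i, loA <= tA i <= hiA) -> (forall i, loB <= tB i <= hiB) ->
  0 <= loA -> 0 <= loB ->
  forall z, loA * loB * nsq z <= qf (A *t B) z <= hiA * hiB * nsq z.
Proof.
move=> UAU hA UBU hB htA htB lA lB.
have ctr : map_mx Num.conj (UA *t UB)^T =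
    map_mx Num.conj UA^T *t map_mx Num.conj UB^T.
  by rewrite trmx_tens map_mxT.
apply: (qf_bounds (W := UA *t UB)
  (t := fun k => tA (mxtens_unindex k).1 * tB (mxtens_unindex k).2)).
- by rewrite ctr tensmx_mul UAU UBU tens11.
  rewrite ctr.
  have -> : diag_mx (\row_k real_complex R
        (tA (mxtens_unindex k).1 * tB (mxtens_unindex k).2)) =
      diag_mx (\row_i real_complex R (tA i)) *t diag_mx (\row_i real_complex R (tB i)).
    rewrite tens_diag; congr diag_mx; apply/rowP => k.
    by rewrite !mxE rmorphM.
  by rewrite !tensmx_mul map_mxT hA hB.
- move=> k; have /andP [a1 a2] := htA (mxtens_unindex k).1.
  have /andP [b1 b2] := htB (mxtens_unindex k).2.
  rewrite ler_pM //= ler_pM //; first exact: le_trans a1.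
  exact: le_trans b1.
Qed.

Lemma qf_gram (R : realType) p q (M : 'M[R]_(p, q)) (x : 'cV[R]_p) :
  qf (M *m M^T) x = nsq (M^T *m x).
Proof. by rewrite /qf /nsq trmx_mul trmxK !mulmxA. Qed.

Lemma gram_sym (R : realType) p q (M : 'M[R]_(p, q)) : (M *m M^T)^T = M *m M^T.
Proof. by rewrite trmx_mul trmxK. Qed.

Lemma gram_psd (R : realType) p q (M : 'M[R]_(p, q)) x : 0 <= qf (M *m M^T) x.
Proof. by rewrite qf_gram nsq_ge0. Qed.

Lemma posdef_lmin (R : realType) n (A : 'M[R]_n) : (0 < n)%N -> posdef A -> 0 < lmin A.
Proof.
move=> n0 [As Ap]; have [_ /eigenvalueP [v hv vn0] _ _] := sym_spec n0 As.
have hp : 0 < nsq v^T by apply: nsq_gt0; rewrite trmx_eq0.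
have := Ap v^T; rewrite trmx_eq0 => /(_ vn0).
by rewrite -/(qf A v^T) (eig_qf hv) pmulr_lgt0.
Qed.

Lemma lmin_ge0 (R : realType) n (A : 'M[R]_n) : (0 < n)%N -> A^T = A ->
  (forall x, 0 <= qf A x) -> 0 <= lmin A.
Proof. by move=> n0 As Ap; have [_ h _ _] := sym_spec n0 As; apply: eig_ge0 h. Qed.

Lemma lmax_ge0 (R : realType) n (A : 'M[R]_n) : (0 < n)%N -> A^T = A ->
  (forall x, 0 <= qf A x) -> 0 <= lmax A.
Proof. by move=> n0 As Ap; have [h _ _ _] := sym_spec n0 As; apply: eig_ge0 h. Qed.

Lemma lmax_gram (R : realType) p q (M : 'M[R]_(p, q)) : (0 < p)%N -> (0 < q)%N ->
  lmax (M *m M^T) <= lmax (M^T *m M).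
Proof.
move=> p0 q0.
have sym1 : (M *m M^T)^T = M *m M^T by apply: gram_sym.
have sym2 : (M^T *m M)^T = M^T *m M by have := gram_sym M^T; rewrite trmxK.
have psd2 : forall x, 0 <= qf (M^T *m M) x.
  by move=> x; have := gram_psd M^T x; rewrite trmxK.
have [e1 _ _ _] := sym_spec p0 sym1.
have [_ _ hq2 _] := sym_spec q0 sym2.
move: e1; set a := lmax _ => e1.
have [a0|a0] := leP a 0.
  by apply: le_trans a0 _; apply: lmax_ge0.
move/eigenvalueP: e1 => [v hv vn0].
have he : eigenvalue (M^T *m M) a.
  apply/eigenvalueP; exists (v *m M).
    by rewrite mulmxA -(mulmxA v) hv -scalemxAl.
  apply/negP => /eqP h0; move: vn0; have := congr1 (mulmx^~ M^T) h0.
  rewrite -mulmxA hv mul0mx => /eqP; rewrite scaler_eq0 (gt_eqF a0) /= => ->.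
  by [].
by have /andP [_ ->] := eig_bounds hq2 he.
Qed.

Lemma sandwich_qf (R : realType) n d (Q : 'M[R]_(n, d)) (S Sg : 'M[R]_d) :
  (0 < d)%N -> S^T = S -> S *m S = Sg ->
  forall x, lmin (Q^T *m Q) * lmin Sg * nsq x <= qf (S *m (Q^T *m Q) *m S) x
            <= lmax (Q^T *m Q) * lmax Sg * nsq x.
Proof.
move=> d0 Ss hSg x.
have sym2 : (Q^T *m Q)^T = Q^T *m Q by have := gram_sym Q^T; rewrite trmxK.
have psd2 : forall x, 0 <= qf (Q^T *m Q) x.
  by move=> y; have := gram_psd Q^T y; rewrite trmxK.
have symS : Sg^T = Sg by rewrite -hSg trmx_mul Ss.
have [_ _ hN _] := sym_spec d0 sym2.
have [_ _ hG _] := sym_spec d0 symS.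
have e1 : qf (S *m (Q^T *m Q) *m S) x = qf (Q^T *m Q) (S *m x).
  by rewrite /qf trmx_mul Ss !mulmxA.
have e2 : nsq (S *m x) = qf Sg x by rewrite /qf /nsq trmx_mul Ss -hSg !mulmxA.
have /andP [n1 n2] := hN (S *m x); have /andP [g1 g2] := hG x.
have l0 := lmin_ge0 d0 sym2 psd2; have m0 := lmax_ge0 d0 sym2 psd2.
rewrite e1 -!mulrA; apply/andP; split.
  by apply: le_trans n1; rewrite e2 ler_wpM2l.
by apply: le_trans n2 _; rewrite e2 ler_wpM2l.
Qed.

Lemma term_bounds (R : realType) p a n d (P : 'M[R]_(p, a)) (Q : 'M[R]_(n, d))
  (S Sg : 'M[R]_d) :
  (0 < p)%N -> (0 < a)%N -> (0 < d)%N -> S^T = S -> S *m S = Sg ->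
  sigma_min P ^+ 2 <= lmin (P *m P^T) -> sigma_min Q ^+ 2 <= lmin (Q^T *m Q) ->
  sigma_max Q ^+ 2 = lmax (Q^T *m Q) -> 0 <= lmin Sg ->
  forall z, sigma_min P ^+ 2 * sigma_min Q ^+ 2 * lmin Sg * nsq z <=
     qf ((P *m P^T) *t (S *m (Q^T *m Q) *m S)) z <=
     sigma_max P ^+ 2 * sigma_max Q ^+ 2 * lmax Sg * nsq z.
Proof.
move=> p0 a0 d0 Ss hSg hP hQ hQm hSg0.
set A := P *m P^T; set N := Q^T *m Q; set B := S *m N *m S.
have symA : A^T = A by apply: gram_sym.
have psdA : forall x, 0 <= qf A x by move=> x; apply: gram_psd.
have symN : N^T = N by have := gram_sym Q^T; rewrite trmxK.
have psdN : forall x, 0 <= qf N x.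
  by move=> y; have := gram_psd Q^T y; rewrite trmxK.
have symB : B^T = B by rewrite /B trmx_mul [(S *m N)^T]trmx_mul Ss symN mulmxA.
have hB := sandwich_qf Q d0 Ss hSg.
have psdB : forall x, 0 <= qf B x.
  move=> x; have /andP [h _] := hB x; apply: le_trans h.
  by rewrite mulr_ge0 ?nsq_ge0 // mulr_ge0 // lmin_ge0.
have [eBM eBm _ [UB [tB [UBU hBd htB]]]] := sym_spec d0 symB.
have [eAM eAm _ [UA [tA [UAU hAd htA]]]] := sym_spec p0 symA.
have lA0 := lmin_ge0 p0 symA psdA; have lB0 := lmin_ge0 d0 symB psdB.
have := tens_bounds UAU hAd UBU hBd htA htB lA0 lB0.
move=> hT z; have /andP [t1 t2] := hT z; apply/andP; split.
  apply: le_trans t1; rewrite ler_wpM2r ?nsq_ge0 //.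
  rewrite -mulrA ler_pM ?sqr_ge0 //; first by rewrite mulr_ge0 ?sqr_ge0.
  have /andP [h _] := eig_bounds hB eBm; apply: le_trans h.
  by rewrite ler_wpM2r // (le_trans hQ).
apply: le_trans t2 _; rewrite ler_wpM2r ?nsq_ge0 //.
rewrite -mulrA ler_pM ?lmax_ge0 //.
  apply: (le_trans (lmax_gram P p0 a0)).
  rewrite /sigma_max sqr_sqrtr //; apply: lmax_ge0 => //.
    by have := gram_sym P^T; rewrite trmxK.
  by move=> y; have := gram_psd P^T y; rewrite trmxK.
have /andP [_ h] := eig_bounds hB eBM; apply: le_trans h _.
by rewrite hQm.
Qed.

Lemma prodW_diag (R : realType) (a : nat -> nat)
  (W : forall l : nat, 'M[R]_(a l.+1, a l)) beta i :
  prodW W beta i i = rid _ _ _.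
Proof. by case: i => //= i; rewrite ltnn. Qed.

Lemma rid_sq (R : realType) n : rid R n n = 1%:M.
Proof. by apply/matrixP => i j; rewrite !mxE. Qed.

Lemma sigma_min_wide (R : realType) p q (M : 'M[R]_(p, q)) :
  ~~ (q <= p)%N -> sigma_min M = Num.sqrt (lmin (M *m M^T)).
Proof. by move=> h; rewrite /sigma_min (negbTE h). Qed.

Lemma sigma_min_tall (R : realType) p q (M : 'M[R]_(p, q)) :
  (q <= p)%N -> sigma_min M = Num.sqrt (lmin (M^T *m M)).
Proof. by move=> h; rewrite /sigma_min h. Qed.

Lemma qf_sum (R : realType) n (I : Type) (r : seq I) (Pr : pred I)
  (F : I -> 'M[R]_n) x :
  qf (\sum_(i <- r | Pr i) F i) x = \sum_(i <- r | Pr i) qf (F i) x.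
Proof. by rewrite /qf mulmx_sumr mulmx_suml summxE. Qed.

Lemma le_bigmax_range (R : realType) n m (F : nat -> R) i :
  (m <= i < n)%N -> F i <= \big[Num.max/0]_(m <= j < n) F j.
Proof.
elim: n m F i => [|n IH] m F i /andP [hmi hin]; first by [].
have hmn : (m <= n)%N by apply: leq_trans hmi _; rewrite -ltnS.
rewrite big_nat_recl //; case: (eqVneq i m) => [->|him].
  by rewrite le_max lexx.
rewrite le_max; apply/orP; right.
case: i hmi hin him => [|i] hmi hin him.
  by move: hmi; rewrite leqn0 => /eqP h; rewrite h eqxx in him.
apply: (IH m (fun j => F j.+1) i); apply/andP; split => //.
by rewrite -ltnS ltn_neqAle eq_sym him hmi.
Qed.

Unset Implicit Arguments.
Set Strict Implicit.

Theorem mainTheorem3 (R : realType) (L d k m : nat)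
  (W : forall l : nat, 'M[R]_(width L d k m l.+1, width L d k m l))
  (beta : R) (Sigma : 'M[R]_d) :
  (1 <= L)%N -> (0 < d)%N -> (0 < k)%N -> (maxn d k < m)%N ->
  posdef Sigma ->
  let P l := prodW W beta L l in         (* W_beta^{L:l+1}  *)
  let Q l := prodW W beta l.-1 0 in      (* W_beta^{l-1:1}  *)
  let S := psd_sqrt Sigma in
  let G := \sum_(1 <= l < L.+1)
             ((P l *m (P l)^T) *t (S *m ((Q l)^T *m Q l) *m S)) in
  let alpha l := sigma_min (P l) ^+ 2 * sigma_min (Q l) ^+ 2 in
  let gamma l := alpha l / \sum_(1 <= i < L.+1) alpha i in
  (forall l, (1 <= l <= L)%N -> 0 < alpha l) ->
  posdef G /\
  kappa_spd G <= kappa_spd Sigma *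
     \sum_(1 <= l < L.+1) gamma l * kappa_rect (P l) ^+ 2 * kappa_rect (Q l) ^+ 2 /\
  kappa_spd Sigma *
     \sum_(1 <= l < L.+1) gamma l * kappa_rect (P l) ^+ 2 * kappa_rect (Q l) ^+ 2
  <= kappa_spd Sigma *
     \big[Num.max/0]_(1 <= l < L.+1) (kappa_rect (P l) ^+ 2 * kappa_rect (Q l) ^+ 2).
Proof.
move=> hL hd hk hm hSig P Q S G alpha gamma halpha.
have m0 : (0 < m)%N by apply: leq_ltn_trans hm.
have wpos : forall l, (0 < width L d k m l)%N.
  by move=> l; rewrite /width; case: (l == 0)%N => //; case: (l == L).
have L0 : (L == 0)%N = false by apply/negbTE; rewrite -lt0n.
have wL : width L d k m L = k by rewrite /width L0 eqxx.
have [SigS SigP] := hSig.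
have Sig_psd : forall x, 0 <= qf Sigma x.
  move=> x; case: (eqVneq x 0) => [->|xn0].
    by rewrite /qf mulmx0 mxE.
  exact/ltW/SigP.
have [[Ssym _] SS] : psd S /\ S *m S = Sigma :=
  xgetPex 0 (sqrt_exists SigS Sig_psd).
have lS0 := posdef_lmin hd hSig.
have gramT : forall p q (M : 'M[R]_(p, q)), (M^T *m M)^T = M^T *m M.
  by move=> p q M; have := gram_sym M^T; rewrite trmxK.
have gramTp : forall p q (M : 'M[R]_(p, q)) x, 0 <= qf (M^T *m M) x.
  by move=> p q M x; have := gram_psd M^T x; rewrite trmxK.
pose term l := (P l *m (P l)^T) *t (S *m ((Q l)^T *m Q l) *m S).
pose hi l := sigma_max (P l) ^+ 2 * sigma_max (Q l) ^+ 2 * lmax Sigma.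
have hterm : forall l, (1 <= l <= L)%N -> forall z,
    alpha l * lmin Sigma * nsq z <= qf (term l) z <= hi l * nsq z.
  move=> l /andP [l1 lL]; rewrite /alpha /hi /term.
  apply: term_bounds => //.
  - case: (ltngtP l L) => [lt|gt|->].
    + rewrite sigma_min_wide ?sqr_sqrtr //.
        exact: lmin_ge0 (wpos _) (gram_sym _) (gram_psd _).
      rewrite wL /width (gtn_eqF l1) (ltn_eqF lt) -ltnNge.
      exact: leq_ltn_trans (leq_maxr d k) hm.
    + by rewrite ltnNge lL in gt.
    + rewrite /P prodW_diag rid_sq sigma_min_tall // trmx1 sqr_sqrtr //.
      apply: lmin_ge0 (wpos L) _ _; first by rewrite mulmx1 trmx1.
      by move=> x; rewrite mulmx1 /qf mulmx1; apply: nsq_ge0.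
  - rewrite sigma_min_tall ?sqr_sqrtr //.
      exact: lmin_ge0 hd (gramT _ _ _) (gramTp _ _ _).
    rewrite /width /=; case: (l.-1 == 0)%N => //.
    have -> : (l.-1 == L) = false.
      by apply/negbTE; rewrite neq_ltn; apply/orP; left; rewrite prednK.
    by apply: leq_trans (leq_maxl d k) (ltnW hm).
  - by rewrite /sigma_max sqr_sqrtr // lmax_ge0 // => x; apply: gramTp.
  - exact: ltW.
pose sA := \sum_(1 <= i < L.+1) alpha i.
have sA0 : 0 < sA.
  have : \sum_(1 <= i < L.+1) (0 : R) < sA.
    by apply: ltr_sum_nat => // i hi; apply: halpha.
  by rewrite big1.
pose hiT := \sum_(1 <= l < L.+1) hi l.
have hG : forall z, sA * lmin Sigma * nsq z <= qf G z <= hiT * nsq z.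
  move=> z; rewrite /G qf_sum /sA /hiT !mulr_suml; apply/andP; split;
    apply: ler_sum_nat => l hl; by case/andP: (hterm l hl z).
have termsym : forall l,
    ((P l *m (P l)^T) *t (S *m ((Q l)^T *m Q l) *m S))^T =
    (P l *m (P l)^T) *t (S *m ((Q l)^T *m Q l) *m S).
  move=> l; rewrite trmx_tens gram_sym; congr (_ *t _).
  by rewrite trmx_mul [(S *m _)^T]trmx_mul Ssym gramT mulmxA.
have Gsym : G^T = G.
  apply/matrixP => i j; rewrite /G mxE !summxE; apply: eq_bigr => l _.
  by rewrite -[in RHS](termsym l) [in RHS]mxE.
have lo0 : 0 < sA * lmin Sigma by rewrite mulr_gt0.
have nG : (0 < width L d k m L * d)%N by rewrite muln_gt0 wpos hd.
have [eGM eGm _ _] := sym_spec nG Gsym.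
have /andP [lGm _] := eig_bounds hG eGm.
have /andP [lGM1 lGM2] := eig_bounds hG eGM.
split.
  split => // z zn0; have /andP [h _] := hG z; apply: lt_le_trans h.
  by rewrite mulr_gt0 // nsq_gt0.
have hiT0 : 0 <= hiT by apply: le_trans lGM2; apply: le_trans lGM1; apply: ltW.
have kS0 : 0 <= kappa_spd Sigma.
  by rewrite /kappa_spd divr_ge0 // ?(ltW lS0) // lmax_ge0.
split.
  apply: (@le_trans _ _ (hiT / (sA * lmin Sigma))).
    apply: (@le_trans _ _ (hiT / lmin G)).
      by rewrite ler_wpM2r // invr_ge0 (ltW (lt_le_trans lo0 lGm)).
    rewrite ler_wpM2l // lef_pV2 ?posrE //; exact: lt_le_trans lo0 lGm.
  have eterm : forall l, (1 <= l < L.+1)%N ->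
      gamma l * kappa_rect (P l) ^+ 2 * kappa_rect (Q l) ^+ 2 =
      sigma_max (P l) ^+ 2 * sigma_max (Q l) ^+ 2 / sA.
    move=> l hl; have := halpha l hl; rewrite /gamma -/sA /alpha /kappa_rect.
    move=> ha.
    have hp : sigma_min (P l) != 0.
      by apply: contraTneq ha => ->; rewrite expr0n /= mul0r ltxx.
    have hq : sigma_min (Q l) != 0.
      by apply: contraTneq ha => ->; rewrite expr0n /= mulr0 ltxx.
    have sAn : sA != 0 by rewrite gt_eqF.
    by field; rewrite sAn hp hq.
  rewrite (eq_big_nat _ _ eterm) -mulr_suml /kappa_spd /hiT /hi -mulr_suml.
  have lSn : lmin Sigma != 0 by rewrite gt_eqF.
  have sAn : sA != 0 by rewrite gt_eqF.
  rewrite le_eqVlt; apply/orP; left; apply/eqP; field.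
  by apply/andP; split; [exact: sAn | exact: lSn].
rewrite ler_wpM2l //.
set Mx := \big[Num.max/0]_(1 <= l < L.+1) _.
apply: (@le_trans _ _ (\sum_(1 <= l < L.+1) gamma l * Mx)).
  apply: ler_sum_nat => l hl; rewrite -mulrA ler_wpM2l //.
    by rewrite /gamma divr_ge0 // ltW // halpha.
  exact: (le_bigmax_range (fun l => kappa_rect (P l) ^+ 2 * kappa_rect (Q l) ^+ 2)).
rewrite -mulr_suml /gamma -mulr_suml -/sA divff ?mul1r //.
by rewrite gt_eqF.
Qed.
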